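(* There exists a $(39,3)$-arc in $\operatorname{PG}(2,25)$; hence $m_3(2,25)\ge 39$.
   Context: Points of $\operatorname{PG}(2,q)$ are the 1-dimensional subspaces of $\operatorname{GF}(q)^3$, lines are the 2-dimensional subspaces. An $(n,r)$-arc in $\operatorname{PG}(2,q)$ is a set $\mathcal B$ of $n$ points such that every line contains at most $r$ points of $\mathcal B$ and at least one line contains exactly $r$ points of $\mathcal B$. $m_r(2,q)$ is the maximum $n$ for which an $(n,r)$-arc in $\operatorname{PG}(2,q)$ exists. *)

(* Defs.v *)
From mathcomp Require Import all_boot all_order all_algebra.
Set Implicit Arguments. Unset Strict Implicit. Unset Printing Implicit Defensive.
Import GRing.Theory.
Local Open Scope ring_scope.

(* A subspace of F^3 (row vectors 'rV[F]_3)
   is represented canonically by the square matrix <<A>>%MS whose row space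
   it is: the map  U |-> <<U>>%MS  is a bijection between subspaces of
   F^3 and matrices A : 'M[F]_3 with <<A>>%MS = A. *)
Section PG2.
Variable F : finFieldType.

Definition pg_point (A : 'M[F]_3) : bool := (\rank A == 1%N) && (<<A>>%MS == A).
Definition pg_line (A : 'M[F]_3) : bool := (\rank A == 2%N) && (<<A>>%MS == A).

Definition on_line (B : {set 'M[F]_3}) (L : 'M[F]_3) : {set 'M[F]_3} :=
  [set P in B | (P <= L)%MS].

Definition is_r_arc (r : nat) (B : {set 'M[F]_3}) : bool :=
  [&& [forall P in B, pg_point P],
      [forall L, pg_line L ==> (#|on_line B L| <= r)%N] &
      [exists L, pg_line L && (#|on_line B L| == r)]].

Definition is_arc (n r : nat) (B : {set 'M[F]_3}) : bool :=
  is_r_arc r B && (#|B| == n).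

Definition m_r (r : nat) : nat := \max_(B : {set 'M[F]_3} | is_r_arc r B) #|B|.

End PG2.

(* Main.v *)
Require Import Defs.
From mathcomp Require Import all_boot all_order all_algebra.
From mathcomp Require Import all_field ring.
Set Implicit Arguments. Unset Strict Implicit. Unset Printing Implicit Defensive.
Import GRing.Theory.
Local Open Scope ring_scope.

Definition cel := (nat * nat)%type.
Definition cadd (x y : cel) : cel := ((x.1 + y.1) %% 5, (x.2 + y.2) %% 5)%N.
Definition cneg (x : cel) : cel := ((4 * x.1) %% 5, (4 * x.2) %% 5)%N.
Definition csub (x y : cel) : cel := cadd x (cneg y).
Definition cmul (x y : cel) : cel := ((x.1 * y.1 + 2 * (x.2 * y.2)) %% 5, (x.1 * y.2 + x.2 * y.1) %% 5)%N.
Definition cz (x : cel) : bool := (x.1 %% 5 == 0)%N && (x.2 %% 5 == 0)%N.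
Definition tab : seq (seq nat) := [:: [:: 0; 1; 1];[:: 0; 1; 12];[:: 0; 1; 17];[:: 1; 0; 1];[:: 1; 0; 12];[:: 1; 0; 17];[:: 1; 1; 1];[:: 1; 1; 12];[:: 1; 1; 17];[:: 1; 2; 1];[:: 1; 2; 12];[:: 1; 2; 17];[:: 1; 3; 2];[:: 1; 3; 9];[:: 1; 3; 24];[:: 1; 4; 5];[:: 1; 4; 11];[:: 1; 4; 14];[:: 1; 8; 10];[:: 1; 8; 22];[:: 1; 8; 23];[:: 1; 10; 2];[:: 1; 10; 9];[:: 1; 10; 24];[:: 1; 15; 10];[:: 1; 15; 22];[:: 1; 15; 23];[:: 1; 16; 2];[:: 1; 16; 9];[:: 1; 16; 24];[:: 1; 22; 10];[:: 1; 22; 22];[:: 1; 22; 23];[:: 1; 24; 7];[:: 1; 24; 8];[:: 1; 24; 15];[:: 1; 5; 0];[:: 1; 14; 0];[:: 1; 17; 0]].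

Definition code (x : nat) : cel := (x %% 5, x %/ 5)%N.
Definition ent (k : nat) (j : nat) : cel := code (nth 0%N (nth [::] tab k) j).
Definition cdet3 (u v w : nat -> cel) : cel :=
  csub (cadd (cmul (u 0%N) (csub (cmul (v 1%N) (w 2%N)) (cmul (v 2%N) (w 1%N))))
             (cmul (u 2%N) (csub (cmul (v 0%N) (w 1%N)) (cmul (v 1%N) (w 0%N)))))
       (cmul (u 1%N) (csub (cmul (v 0%N) (w 2%N)) (cmul (v 2%N) (w 0%N)))).
Definition zdet (a b c : nat) : bool := cz (cdet3 (ent a) (ent b) (ent c)).
Definition check1b := all (fun a => all (fun b => (a == b) || (count (zdet a b) (iota 0 39) <= 3)%N) (iota 0 39)) (iota 0 39).
Definition check2b := all (fun a => all (fun b => (a == b) || has (fun c => ~~ zdet a b c) (iota 0 39)) (iota 0 39)) (iota 0 39).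
Lemma c1 : check1b. Proof. vm_compute. reflexivity. Qed.
Lemma c2 : check2b. Proof. vm_compute. reflexivity. Qed.

Definition o0 : 'I_3 := @Ordinal 3 0 isT.
Definition o1 : 'I_3 := @Ordinal 3 1 isT.
Definition o2 : 'I_3 := @Ordinal 3 2 isT.
Lemma det3 (R : comNzRingType) (A : 'M[R]_3) : \det A =
  A o0 o0 * (A o1 o1 * A o2 o2 - A o1 o2 * A o2 o1)
  + A o0 o2 * (A o1 o0 * A o2 o1 - A o1 o1 * A o2 o0)
  - A o0 o1 * (A o1 o0 * A o2 o2 - A o1 o2 * A o2 o0).
Proof.
have eA : A = \matrix_(t, u) A (inord (val t)) (inord (val u)).
  by apply/matrixP => t u; rewrite mxE !inord_val.
rewrite {}eA.
rewrite (expand_det_row _ o0) !big_ord_recr big_ord0 /cofactor /=.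
rewrite !(expand_det_row _ ord0) !big_ord_recr !big_ord0 /cofactor /=.
rewrite !det_mx11 !mxE /=.
ring.
Qed.

Section Fld.
Variable F : finFieldType.
Hypothesis hF : #|F| = 25%N.

Lemma char5 : (5 \in [pchar F])%N.
Proof. by apply: (@card_finPcharP _ _ 2); [exact: hF|]. Qed.

Lemma nat5 n : (n%:R == 0 :> F) = (5 %| n)%N.
Proof. by rewrite (dvdn_pcharf char5). Qed.

Lemma natmod5 n : (n %% 5)%:R = n%:R :> F.
Proof. exact: (GRing.natr_mod_pchar char5). Qed.

Lemma two12 : (2 : F) ^+ 12 = 1.
Proof.
have -> : (2 : F) ^+ 12 = (4096%N)%:R by rewrite -natrX.
by rewrite -natmod5.
Qed.

Lemma sqrt2 : exists i : F, i ^+ 2 = 2.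
Proof.
have hdiv : ('X^2 - 2%:P : {poly F}) %| 'X^#|F| - 'X.
  rewrite hF.
  have e : 'X^25 - 'X = 'X * (('X^2)^+12 - (2%:P)^+12) :> {poly F}.
    by rewrite -exprM -rmorphXn two12 mulrBr mulr1 -exprS.
  by rewrite e dvdp_mull // subrXX dvdp_mulr.
rewrite finField_genPoly in hdiv.
have [m hm] := dvdp_prod_XsubC hdiv.
case E: (mask m (index_enum F)) hm => [|x s] hm.
  by move: hm; rewrite big_nil => /eqp_size; rewrite size_poly1 size_XnsubC.
exists x.
have : root (\prod_(i <- x :: s) ('X - i%:P)) x.
  by rewrite big_cons rootM root_XsubC eqxx.
rewrite -(eqp_root hm) /root !hornerE => /eqP /eqP.
by rewrite subr_eq0 => /eqP.
Qed.

Variable i : F.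
Hypothesis hi : i ^+ 2 = 2.

Definition phi (x : cel) : F := x.1%:R + x.2%:R * i.

Lemma phiD x y : phi (cadd x y) = phi x + phi y.
Proof. rewrite /phi /= !natmod5 !natrD; ring. Qed.

Lemma four : 4%:R = - 1 :> F.
Proof.
apply/eqP; rewrite -subr_eq0 opprK.
have : (5%N%:R : F) == 0 by rewrite nat5.
by rewrite (_ : 5%N = 4 + 1)%N // natrD.
Qed.

Lemma phiN x : phi (cneg x) = - phi x.
Proof. rewrite /phi /= !natmod5 !natrM four; ring. Qed.

Lemma phiB x y : phi (csub x y) = phi x - phi y.
Proof. by rewrite /csub phiD phiN. Qed.

Lemma phiM x y : phi (cmul x y) = phi x * phi y.
Proof.
rewrite /phi /= !natmod5 !natrD !natrM.
rewrite [RHS](_ : _ = x.1%:R*y.1%:R + x.2%:R*y.2%:R*i^+2 + (x.1%:R*y.2%:R + x.2%:R*y.1%:R)*i); last by ring.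
rewrite hi; ring.
Qed.

Lemma phi0 x : phi x = 0 -> cz x.
Proof.
rewrite /phi /cz => h.
set a : F := x.1%:R in h; set b : F := x.2%:R in h.
have h5 : a + b * i ^+ 5 = 0.
  have := congr1 (pFrobenius_aut char5) h.
  rewrite pFrobenius_autD_comm; last exact: mulrC.
  rewrite pFrobenius_autM_comm; last exact: mulrC.
  by rewrite !pFrobenius_aut_nat pFrobenius_aut0 !pFrobenius_autE.
have e5 : i ^+ 5 = 4%:R * i.
  by rewrite (_ : 5%N = (2 * 2).+1)%N // exprS exprM hi mulrC -natrX.
rewrite e5 four in h5.
have hb : b * i = 0.
  have : (a + b * i) - (a + b * ((-1) * i)) = 0 by rewrite h h5 subrr.
  have -> : (a + b * i) - (a + b * ((-1) * i)) = 2%:R * (b * i) by ring.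
  move/eqP; rewrite mulf_eq0 nat5 /= => /eqP //.
have i0 : i != 0.
  apply/eqP => i0; move: hi; rewrite i0 expr0n /= => /eqP.
  by rewrite eq_sym nat5.
move: hb => /eqP; rewrite mulf_eq0 (negbTE i0) orbF => /eqP hb0.
move: h; rewrite hb0 mul0r addr0 => ha0.
move: hb0 ha0; rewrite /a /b => /eqP; rewrite nat5 => h2 /eqP; rewrite nat5 => h1.
by apply/andP; split.
Qed.
Definition vec (k : nat) : 'rV[F]_3 := \row_(j < 3) phi (ent k j).
Definition mat3 (a b c : nat) : 'M[F]_3 :=
  \matrix_(r < 3, j < 3) phi (ent (nth 0%N [:: a; b; c] r) j).

Lemma det_mat3 a b c : \det (mat3 a b c) = phi (cdet3 (ent a) (ent b) (ent c)).
Proof.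
rewrite det3 !mxE /cdet3 !(phiB, phiD, phiM) /=.
ring.
Qed.

Lemma det_ne0 a b c : ~~ zdet a b c -> \det (mat3 a b c) != 0.
Proof.
move=> h; apply/eqP => e; rewrite det_mat3 in e.
by move: h; rewrite /zdet (phi0 e).
Qed.

Lemma row_mat3 a b c (r : 'I_3) : row r (mat3 a b c) = vec (nth 0%N [:: a; b; c] r).
Proof. by apply/rowP => j; rewrite !mxE. Qed.

Lemma rank3 a b c (L : 'M[F]_3) : ~~ zdet a b c ->
  (vec a <= L)%MS -> (vec b <= L)%MS -> (vec c <= L)%MS -> (3 <= \rank L)%N.
Proof.
move=> hz ha hb hc.
have hs : (mat3 a b c <= L)%MS.
  apply/row_subP => r; rewrite row_mat3.
  by case: r => [[|[|[|r]]] Hr] //=.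
have := mxrankS hs.
rewrite mxrank_unit // unitmxE unitfE.
exact: det_ne0.
Qed.

Definition g (k : nat) : 'M[F]_3 := <<vec k>>%MS.

Lemma vec_g k : (vec k <= g k)%MS.
Proof. by rewrite /g genmxE submx_refl. Qed.

Lemma rank_g k : (\rank (g k) <= 1)%N.
Proof. by rewrite /g mxrank_gen rank_leq_row. Qed.

Lemma small2 a b c k l : ~~ zdet a b c ->
  (vec a <= g k + g l)%MS -> (vec b <= g k + g l)%MS -> (vec c <= g k + g l)%MS -> False.
Proof.
move=> hz ha hb hc.
have := rank3 hz ha hb hc.
have h1 := (mxrank_adds_leqif (g k) (g l)).1.
have h2 := rank_g k; have h3 := rank_g l.
move=> h4.
have : (3 <= 2)%N.
  apply: (leq_trans h4); apply: (leq_trans h1).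
  exact: (leq_add h2 h3).
by [].
Qed.

Lemma ex_c a b : (a < 39)%N -> (b < 39)%N -> a != b -> exists c, ~~ zdet a b c.
Proof.
move=> ha hb hab.
have := c2; move/allP/(_ a); rewrite mem_iota add0n ha => /(_ isT).
move/allP/(_ b); rewrite mem_iota add0n hb => /(_ isT).
rewrite (negbTE hab) orFb => /hasP [c _ hc]; by exists c.
Qed.

Lemma g_inj a b : (a < 39)%N -> (b < 39)%N -> g a = g b -> a = b.
Proof.
move=> ha hb e; apply/eqP; apply/negPn/negP => hab.
have [c hc] := ex_c ha hb hab.
apply: (small2 (k := a) (l := c) hc).
- exact: (submx_trans (vec_g a) (addsmxSl _ _)).
- have e' : (g b <= g a + g c)%MS by rewrite -e addsmxSl.
  exact: (submx_trans (vec_g b) e').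
- exact: (submx_trans (vec_g c) (addsmxSr _ _)).
Qed.

Lemma vec_neq0 a : (a < 39)%N -> vec a != 0.
Proof.
move=> ha; apply/eqP => e.
pose b := if a == 0%N then 1%N else 0%N.
have hb : (b < 39)%N by rewrite /b; case: (a == 0%N).
have hab : a != b by rewrite /b; case: (a =P 0%N) => [->|/eqP].
have [c hc] := ex_c ha hb hab.
apply: (small2 (k := b) (l := c) hc).
- by rewrite e sub0mx.
- exact: (submx_trans (vec_g b) (addsmxSl _ _)).
- exact: (submx_trans (vec_g c) (addsmxSr _ _)).
Qed.

Definition G (k : 'I_39) : 'M[F]_3 := g k.
Definition B0 : {set 'M[F]_3} := G @: [set: 'I_39].

Lemma G_inj : injective G.
Proof. by move=> a b /g_inj e; apply: val_inj; apply: e. Qed.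

Lemma G_point k : pg_point (G k).
Proof.
rewrite /pg_point /G /g genmx_id eqxx andbT mxrank_gen rank_rV.
by rewrite vec_neq0.
Qed.

Definition K (L : 'M[F]_3) : {set 'I_39} := [set k | (G k <= L)%MS].

Lemma onlineE L : on_line B0 L = G @: K L.
Proof.
apply/setP => P; rewrite /on_line inE; apply/idP/imsetP.
- by case/andP => /imsetP [k _ ->] hk; exists k; rewrite ?inE.
- case=> k; rewrite inE => hk ->; rewrite hk andbT.
  by apply: imset_f; rewrite in_setT.
Qed.

Lemma card_online L : #|on_line B0 L| = #|K L|.
Proof. by rewrite onlineE card_imset //; apply: G_inj. Qed.

Lemma card_zdet (a b : nat) :
  #|[pred c : 'I_39 | zdet a b c]| = count (zdet a b) (iota 0 39).
Proof.
rewrite cardE /enum_mem size_filter -enumT -val_enum_ord count_map.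
by apply: eq_count => c.
Qed.

Lemma line_bound L : pg_line L -> (#|on_line B0 L| <= 3)%N.
Proof.
case/andP => /eqP hr _.
rewrite card_online leqNgt; apply/negP => h4.
have : (0 < #|K L|)%N by apply: (leq_trans _ h4).
case/card_gt0P => a ha.
have : (0 < #|K L :\ a|)%N.
  by move: h4; rewrite (cardsD1 a) ha add1n ltnS; apply: leq_trans.
case/card_gt0P => b; rewrite !inE => /andP [hba hb].
move: ha; rewrite inE => ha.
have sub : K L \subset [pred c : 'I_39 | zdet a b c].
  apply/subsetP => c; rewrite inE => hc; rewrite inE.
  apply/negPn/negP => hz.
  have := rank3 hz (submx_trans (vec_g a) ha) (submx_trans (vec_g b) hb)
     (submx_trans (vec_g c) hc).
  by rewrite hr.
have := subset_leq_card sub; rewrite card_zdet => hle.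
have := c1; move/allP/(_ a); rewrite mem_iota add0n ltn_ord => /(_ isT).
move/allP/(_ b); rewrite mem_iota add0n ltn_ord => /(_ isT).
have hab : (nat_of_ord a == nat_of_ord b) = false.
  by apply/negbTE; rewrite eq_sym; move: hba; apply: contra => /eqP e; apply/eqP/val_inj.
rewrite hab orFb => h3.
by move: h4; rewrite ltnNge (leq_trans hle h3).
Qed.


Definition L0 : 'M[F]_3 := <<col_mx (vec 0) (vec 1)>>%MS.

Lemma vec2E : vec 2 = phi (3,3)%N *: vec 0 + phi (3,2)%N *: vec 1.
Proof.
apply/rowP => j; rewrite !mxE -!phiM -phiD.
by case: j => [[|[|[|j]]] Hj] //=; congr phi.
Qed.

Lemma vec0L0 : (vec 0 <= L0)%MS.
Proof. by rewrite /L0 genmxE -addsmxE addsmxSl. Qed.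
Lemma vec1L0 : (vec 1 <= L0)%MS.
Proof. by rewrite /L0 genmxE -addsmxE addsmxSr. Qed.
Lemma vec2L0 : (vec 2 <= L0)%MS.
Proof. by rewrite vec2E addmx_sub // scalemx_sub // ?vec0L0 ?vec1L0. Qed.

Lemma L0_line : pg_line L0.
Proof.
rewrite /pg_line {2}/L0 genmx_id eqxx andbT eqn_leq.
apply/andP; split.
  by rewrite /L0 mxrank_gen rank_leq_row.
have [c hc] := @ex_c 0 1 isT isT isT.
have h := rank3 hc (submx_trans vec0L0 (addsmxSl L0 (g c)))
  (submx_trans vec1L0 (addsmxSl L0 (g c))) (submx_trans (vec_g c) (addsmxSr L0 (g c))).
have h1 := (mxrank_adds_leqif L0 (g c)).1.
have h2 := rank_g c.
have : (3 <= \rank L0 + 1)%N.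
  apply: (leq_trans h); apply: (leq_trans h1).
  by rewrite leq_add2l.
by rewrite addn1 ltnS.
Qed.

Definition k0 : 'I_39 := @Ordinal 39 0 isT.
Definition k1 : 'I_39 := @Ordinal 39 1 isT.
Definition k2 : 'I_39 := @Ordinal 39 2 isT.

Lemma arc : is_arc 39 3 B0.
Proof.
rewrite /is_arc /is_r_arc; apply/andP; split; last first.
  by rewrite card_imset ?cardsT ?card_ord //; exact: G_inj.
apply/and3P; split.
- by apply/forall_inP => P /imsetP [k _ ->]; exact: G_point.
- by apply/forallP => L; apply/implyP; exact: line_bound.
- apply/existsP; exists L0; rewrite L0_line /= eqn_leq line_bound ?L0_line //=.
  rewrite card_online.
  have sub : [set k0; k1; k2] \subset K L0.
    apply/subsetP => k; rewrite !inE /G /g genmxE.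
    by move=> /orP [/orP [] |] /eqP ->; [exact: vec0L0 | exact: vec1L0 | exact: vec2L0].
  apply: leq_trans (subset_leq_card sub).
  by rewrite setUC !cardsU1 cards1 !inE.
Qed.

End Fld.

Local Close Scope ring_scope.

Theorem mainTheorem11 (F : finFieldType) (hF : #|F| = 25) :
  (exists B : {set 'M[F]_3}, is_arc 39 3 B) /\ (39 <= m_r F 3)%N.
Proof.
have [i hi] := sqrt2 hF.
have ha := arc hF hi.
split; first by exists (B0 i).
move/andP: ha => [hr /eqP <-].
rewrite /m_r; exact: (@leq_bigmax_cond _ (fun B => is_r_arc 3 B) (fun B => #|B|) _ hr).
Qed.
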